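(* Fix one of the moves $F1$, $F2$ and one of the moves $F3$, $F4$. Let $D$ be the Gauss diagram of an arbitrary twisted knot diagram. Then there is a finite sequence of moves of types $R1$, $R2$, $R3$, $T2$, $T3$, together with the forbidden moves $T4$, the chosen one of $F1$/$F2$, and the chosen one of $F3$/$F4$, which transforms $D$ into either the Gauss diagram of the trivial knot (a circle with no chords and no bars) or the Gauss diagram of the trivial knot with a bar (a circle with no chords and exactly one bar).
   Context: A twisted knot diagram is a virtual knot diagram (an oriented generic immersed circle in the plane whose double points are either classical crossings, carrying over/under information, or virtual crossings, carrying none) which may in addition carry finitely many bars: short segments marked transversally on arcs, away from crossings. Twisted knots are equivalence classes of such diagrams under the classical Reidemeister moves $R1,R2,R3$, the virtual Reidemeister moves $V1$–$V4$, and the twisted Reidemeister moves $T1$ (a bar slides through a virtual crossing), $T2$ (two consecutive bars on an arc cancel), $T3$ (a classical crossing having a bar on each of its four incident arcs next to the crossing is replaced by the crossing with over- and under-strand exchanged, the four bars being removed). Gauss diagram of a twisted knot diagram: an oriented circle (the parametrizing circle of the knot) on which are marked, in the order met when traversing the knot from a basepoint, the two preimages of each classical crossing and one point for each bar. For each classical crossing a chord joins its two preimages, oriented from the overcrossing preimage (the arrowtail) to the undercrossing preimage (the arrowhead), and labelled by the sign $\varepsilon\in\{+,-\}$ of the crossing. Virtual crossings are not recorded. Two marked points (chord endpoints or bars) are called adjacent if no other marked point lies between them on the circle. Moves on Gauss diagrams (each may be applied in either direction): - $R1,R2,R3$: the standard Gauss-diagram versions of the classical Reidemeister moves, i.e.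 the changes of Gauss diagrams induced by classical Reidemeister moves on diagrams (e.g. $R1$ adds or removes a chord of any orientation and sign whose two endpoints are adjacent). - $T2$: add or remove two adjacent bars. - $T3$: if each endpoint of a chord is immediately preceded and immediately followed by a bar, remove these four bars, reverse the orientation of the chord and change its sign (the Gauss-diagram version of the move $T3$ above). Virtual moves and $T1$ do not change the Gauss diagram. Forbidden moves: - $T4$: add or remove a chord (of any orientation and sign) whose two endpoints are separated by exactly one bar and no other marked point (a curl with a bar). - $F1$: exchange the positions of two adjacent arrowheads of different chords (signs arbitrary). - $F2$: exchange the positions of two adjacent arrowtails of different chords (signs arbitrary). - $F3$: if two arrowheads of different chords are separated by exactly one bar and no other marked point, exchange their positions (the bar stays between them). - $F4$: the same as $F3$ for two arrowtails. *)

(* Defs.v *)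
From mathcomp Require Import all_boot.

Set Implicit Arguments.
Unset Strict Implicit.
Unset Printing Implicit Defensive.

(* A marked point on the parametrizing circle: either a bar, or an endpoint of
   the chord (classical crossing) with label [c]; [head = true] means the
   arrowhead (undercrossing preimage), [head = false] the arrowtail
   (overcrossing preimage); [pos] is the sign of the crossing (true = +). *)
Inductive pt : Type :=
| Bar : pt
| End : nat -> bool -> bool -> pt.

Definition tl (c : nat) (s : bool) : pt := End c false s.
Definition hd (c : nat) (s : bool) : pt := End c true s.

(* A Gauss diagram is the cyclic word of marked points read from a basepoint;
   [rot] (change of basepoint) does not change the diagram. *)
Definition gauss := seq pt.

Definition is_chord (c : nat) (p : pt) : bool :=
  if p is End c' _ _ then c' == c else false.

Definition endb (c : nat) (h s : bool) (p : pt) : bool :=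
  if p is End c' h' s' then [&& c' == c, h' == h & s' == s] else false.

Definition wf_gauss (w : gauss) : Prop :=
  forall c, count (is_chord c) w = 0 \/
    exists s, [/\ count (endb c false s) w = 1,
                  count (endb c true s) w = 1 &
                  count (is_chord c) w = 2].

Definition fresh (c : nat) (w : gauss) : bool := ~~ has (is_chord c) w.

(* ---------- Moves, stated in one direction (with linear adjacency;
   cyclic adjacency is handled by the basepoint change [rot 1]) ---------- *)

Definition R1_add (w w' : gauss) : Prop :=
  exists u v c s, w = u ++ v /\ fresh c w /\
    (w' = u ++ [:: tl c s; hd c s] ++ v \/ w' = u ++ [:: hd c s; tl c s] ++ v).

(* R2: insert two chords of opposite signs whose arrowtails are adjacent
   (over strand) and whose arrowheads are adjacent (under strand); the under
   strand runs in the same or the opposite direction. *)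
Definition R2_add (w w' : gauss) : Prop :=
  exists a b c i j s, w = a ++ b ++ c /\ i != j /\ fresh i w /\ fresh j w /\
    (w' = a ++ [:: tl i s; tl j (~~ s)] ++ b ++ [:: hd i s; hd j (~~ s)] ++ c \/
     w' = a ++ [:: tl i s; tl j (~~ s)] ++ b ++ [:: hd j (~~ s); hd i s] ++ c).

(* R3: three chords i (top over middle, sign e12), j (top over bottom, sign
   e13), k (middle over bottom, sign e23).  The top strand carries the
   adjacent pair {tail i, tail j}, the middle strand {head i, tail k}, the
   bottom strand {head j, head k}; the booleans o1 o2 o3 give the order inside
   each pair.  Realizability by three strands in the plane forces
   e12*e13 = o2*o3 and e12*e23 = o1*o3 (as signs). *)
Definition r3_top (o1 : bool) i j e12 e13 : seq pt :=
  if o1 then [:: tl i e12; tl j e13] else [:: tl j e13; tl i e12].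
Definition r3_mid (o2 : bool) i k e12 e23 : seq pt :=
  if o2 then [:: hd i e12; tl k e23] else [:: tl k e23; hd i e12].
Definition r3_bot (o3 : bool) j k e13 e23 : seq pt :=
  if o3 then [:: hd j e13; hd k e23] else [:: hd k e23; hd j e13].

Definition arrangement (T : Type) (X Y Z P Q R : T) : Prop :=
  (X, Y, Z) = (P, Q, R) \/ (X, Y, Z) = (P, R, Q) \/ (X, Y, Z) = (Q, P, R) \/
  (X, Y, Z) = (Q, R, P) \/ (X, Y, Z) = (R, P, Q) \/ (X, Y, Z) = (R, Q, P).

Definition R3_move (w w' : gauss) : Prop :=
  exists (i j k : nat) (e12 e13 e23 o1 o2 o3 : bool)
         (X Y Z : seq pt) (a b c d : gauss),
    i != j /\ i != k /\ j != k /\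
    (e12 == e13) = (o2 == o3) /\ (e12 == e23) = (o1 == o3) /\
    arrangement X Y Z (r3_top o1 i j e12 e13) (r3_mid o2 i k e12 e23)
                      (r3_bot o3 j k e13 e23) /\
    w = a ++ X ++ b ++ Y ++ c ++ Z ++ d /\
    w' = a ++ rev X ++ b ++ rev Y ++ c ++ rev Z ++ d.

Definition T2_add (w w' : gauss) : Prop :=
  exists u v, w = u ++ v /\ w' = u ++ [:: Bar; Bar] ++ v.

Definition T3_move (w w' : gauss) : Prop :=
  exists a b c i s,
    w = a ++ [:: Bar; tl i s; Bar] ++ b ++ [:: Bar; hd i s; Bar] ++ c /\
    w' = a ++ [:: hd i (~~ s)] ++ b ++ [:: tl i (~~ s)] ++ c.

Definition T4_add (w w' : gauss) : Prop :=
  exists u v c s, w = u ++ v /\ fresh c w /\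
    (w' = u ++ [:: tl c s; Bar; hd c s] ++ v \/
     w' = u ++ [:: hd c s; Bar; tl c s] ++ v).

Definition F_swap (h : bool) (w w' : gauss) : Prop :=
  exists u v i j s t, i != j /\
    w = u ++ [:: End i h s; End j h t] ++ v /\
    w' = u ++ [:: End j h t; End i h s] ++ v.
Definition F1_move := F_swap true.
Definition F2_move := F_swap false.

Definition F_swap_bar (h : bool) (w w' : gauss) : Prop :=
  exists u v i j s t, i != j /\
    w = u ++ [:: End i h s; Bar; End j h t] ++ v /\
    w' = u ++ [:: End j h t; Bar; End i h s] ++ v.
Definition F3_move := F_swap_bar true.
Definition F4_move := F_swap_bar false.

Inductive choice12 := ChooseF1 | ChooseF2.
Inductive choice34 := ChooseF3 | ChooseF4.

Definition chosen12 (ch : choice12) : gauss -> gauss -> Prop :=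
  match ch with ChooseF1 => F1_move | ChooseF2 => F2_move end.
Definition chosen34 (ch : choice34) : gauss -> gauss -> Prop :=
  match ch with ChooseF3 => F3_move | ChooseF4 => F4_move end.

Definition basic_move (ch12 : choice12) (ch34 : choice34) (w w' : gauss) : Prop :=
  w' = rot 1 w \/ R1_add w w' \/ R2_add w w' \/ R3_move w w' \/
  T2_add w w' \/ T3_move w w' \/ T4_add w w' \/ chosen12 ch12 w w' \/
  chosen34 ch34 w w'.

Definition allowed_move ch12 ch34 (w w' : gauss) : Prop :=
  basic_move ch12 ch34 w w' \/ basic_move ch12 ch34 w' w.

Inductive reachable (step : gauss -> gauss -> Prop) : gauss -> gauss -> Prop :=
| reach_refl w : reachable step w w
| reach_step w w' w'' : step w w' -> reachable step w' w'' -> reachable step w w''.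

(* Main.v *)
Require Import Defs.
From mathcomp Require Import all_boot zify.

Lemma reach_trans st x y z : reachable st x y -> reachable st y z -> reachable st x z.
Proof. move=> H; elim: H => [w|w w' w'' H1 _ IH] Hz; first by []. exact: (reach_step H1 (IH Hz)). Qed.

Lemma mvf ch12 ch34 w w' : basic_move ch12 ch34 w w' -> reachable (allowed_move ch12 ch34) w w'.
Proof. move=> H; apply: (reach_step (w' := w')); [by left | exact: reach_refl]. Qed.
Lemma mvb ch12 ch34 w w' : basic_move ch12 ch34 w' w -> reachable (allowed_move ch12 ch34) w w'.
Proof. move=> H; apply: (reach_step (w' := w')); [by right | exact: reach_refl]. Qed.

Ltac lsimp := do 4 (rewrite -?catA /=).

Lemma t2add ch12 ch34 w w' u v : w = u ++ v -> w' = u ++ Bar :: Bar :: v ->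
  reachable (allowed_move ch12 ch34) w w'.
Proof. move=> -> ->; apply: mvf; do 4 right; left; by exists u, v. Qed.
Lemma t2rem ch12 ch34 w w' u v : w' = u ++ v -> w = u ++ Bar :: Bar :: v ->
  reachable (allowed_move ch12 ch34) w w'.
Proof. move=> -> ->; apply: mvb; do 4 right; left; by exists u, v. Qed.

Lemma bars_even ch12 ch34 j u v :
  reachable (allowed_move ch12 ch34) (u ++ nseq j.*2 Bar ++ v) (u ++ v).
Proof.
elim: j => [|j IH]; first exact: reach_refl.
apply: reach_trans _ _ _ _ _ IH; apply: (t2rem _ _ _ _ u (nseq j.*2 Bar ++ v)) => //.
Qed.

Lemma bars_reduce ch12 ch34 w w' u v k : w = u ++ nseq k Bar ++ v ->
  w' = u ++ nseq (odd k) Bar ++ v -> reachable (allowed_move ch12 ch34) w w'.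
Proof.
move=> -> ->; rewrite -{1}(odd_double_half k) nseqD -catA catA.
rewrite [u ++ nseq (odd k) Bar ++ v]catA. exact: bars_even.
Qed.

Definition h1 ch := if ch is ChooseF1 then true else false.
Definition h2 ch := if ch is ChooseF3 then true else false.

Lemma swap1 ch12 ch34 w w' u v i j s t : i != j ->
  w = u ++ End i (h1 ch12) s :: End j (h1 ch12) t :: v ->
  w' = u ++ End j (h1 ch12) t :: End i (h1 ch12) s :: v ->
  reachable (allowed_move ch12 ch34) w w'.
Proof.
move=> ij -> ->; apply: mvf; do 7 right; left.
by case: ch12 => /=; exists u, v, i, j, s, t.
Qed.
Lemma swap2 ch12 ch34 w w' u v i j s t : i != j ->
  w = u ++ End i (h2 ch34) s :: Bar :: End j (h2 ch34) t :: v ->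
  w' = u ++ End j (h2 ch34) t :: Bar :: End i (h2 ch34) s :: v ->
  reachable (allowed_move ch12 ch34) w w'.
Proof.
move=> ij -> ->; apply: mvf; do 8 right.
by case: ch34 => /=; exists u, v, i, j, s, t.
Qed.

Lemma r1rem ch12 ch34 w w' u v c o s : fresh c w' -> w' = u ++ v ->
  w = u ++ End c o s :: End c (~~o) s :: v -> reachable (allowed_move ch12 ch34) w w'.
Proof.
move=> Hf Ew' ->; apply: mvb; right; left; exists u, v, c, s; subst w'.
by split=> //; split=> //; case: o; [right|left].
Qed.
Lemma t4rem ch12 ch34 w w' u v c o s : fresh c w' -> w' = u ++ v ->
  w = u ++ End c o s :: Bar :: End c (~~o) s :: v -> reachable (allowed_move ch12 ch34) w w'.
Proof.
move=> Hf Ew' ->; apply: mvb; do 6 right; left; exists u, v, c, s; subst w'.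
by split=> //; split=> //; case: o; [right|left].
Qed.

Lemma flip_concrete ch12 ch34 i h s a b e :
  reachable (allowed_move ch12 ch34) (a ++ End i h s :: b ++ End i (~~h) s :: e)
    (a ++ Bar :: End i (~~h) (~~s) :: Bar :: b ++ Bar :: End i h (~~s) :: Bar :: e).
Proof.
case: h.
  apply: mvb; do 5 right; left; exists a, b, e, i, (~~s); split=> //.
  by rewrite negbK.
apply: reach_trans _ _ _ _ (t2add _ _ _ _ a (End i false s :: b ++ End i true s :: e) _ _) _ => //.
apply: reach_trans _ _ _ _ (t2add _ _ _ _ (a ++ [:: Bar; Bar; End i false s]) (b ++ End i true s :: e) _ _) _;
  [by lsimp | by [] |].
apply: reach_trans _ _ _ _ (t2add _ _ _ _ (a ++ [:: Bar; Bar; End i false s; Bar; Bar] ++ b) (End i true s :: e) _ _) _;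
  [by lsimp | by [] |].
apply: reach_trans _ _ _ _ (t2add _ _ _ _ (a ++ [:: Bar; Bar; End i false s; Bar; Bar] ++ b ++ [:: Bar; Bar; End i true s]) (e) _ _) _;
  [by lsimp | by [] |].
apply: mvf; do 5 right; left.
exists (a ++ [:: Bar]), (Bar :: b ++ [:: Bar]), (Bar :: e), i, s; split; by lsimp.
Qed.


Definition isEnd (p : pt) : bool := if p is End _ _ _ then true else false.
Definition nep (w : gauss) := count isEnd w.
Definition flp (p : pt) : pt := if p is End c h s then End c (~~h) (~~s) else Bar.
Definition flipd (d : nat) (w : gauss) : gauss :=
  flatten (map (fun p => if is_chord d p then [:: Bar; flp p; Bar] else [:: p]) w).

Definition samec (w w' : gauss) := forall P : pred pt, P Bar = false -> count P w = count P w'.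

Lemma wf_samec w w' : samec w w' -> wf_gauss w -> wf_gauss w'.
Proof.
move=> H Hw c; case: (Hw c) => [H0|[s [H1 H2 H3]]].
  by left; rewrite -H.
by right; exists s; rewrite -!H.
Qed.

Lemma nep_samec w w' : samec w w' -> nep w' = nep w.
Proof. by move=> H; rewrite /nep H. Qed.

Lemma flipd_cat d u v : flipd d (u ++ v) = flipd d u ++ flipd d v.
Proof. by rewrite /flipd map_cat flatten_cat. Qed.
Lemma flipd_cons d p u : flipd d (p :: u) =
  (if is_chord d p then [:: Bar; flp p; Bar] else [:: p]) ++ flipd d u.
Proof. by []. Qed.
Lemma flipd_free d u : count (is_chord d) u = 0 -> flipd d u = u.
Proof.
elim: u => // p u IH /=; rewrite flipd_cons; case: (is_chord d p) => //= H.
by rewrite IH.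
Qed.
Lemma flipd_nseq d k : flipd d (nseq k Bar) = nseq k Bar.
Proof. by elim: k => //= k IH; rewrite flipd_cons /= IH. Qed.

Lemma count_flipd d P w : P Bar = false ->
  count P (flipd d w) = count (fun p => P (if is_chord d p then flp p else p)) w.
Proof.
move=> PB; elim: w => // p w IH; rewrite flipd_cons count_cat IH /=.
by case: (is_chord d p) => //=; rewrite ?PB /= ?addn0.
Qed.

Lemma wf_flipd d w : wf_gauss w -> wf_gauss (flipd d w).
Proof.
move=> Hw c; rewrite !count_flipd //.
have Ec : (fun p => is_chord c (if is_chord d p then flp p else p)) =1 is_chord c.
  by case=> //= c' h s; case: (c' == d).
rewrite (eq_count Ec).
case: (Hw c) => [H0|[s [H1 H2 H3]]]; first by left.
right; case: (eqVneq c d) => [Ecd|Ncd].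
- subst c; exists (~~s); split=> //.
  + rewrite ?count_flipd // -H2; apply: eq_count; case=> //= c' h t; case: (eqVneq c' d) => [->|/negbTE Hn] /=; rewrite ?eqxx ?Hn //=;
    by case: h; case: t; case: (s).
  + rewrite ?count_flipd // -H1; apply: eq_count; case=> //= c' h t; case: (eqVneq c' d) => [->|/negbTE Hn] /=; rewrite ?eqxx ?Hn //=;
    by case: h; case: t; case: (s).
- exists s; split=> //.
  + rewrite ?count_flipd // -H1; apply: eq_count; case=> //= c' h t; case: (eqVneq c' d) => //= ->.
    by rewrite eq_sym (negbTE Ncd).
  + rewrite ?count_flipd // -H2; apply: eq_count; case=> //= c' h t; case: (eqVneq c' d) => //= ->.
    by rewrite eq_sym (negbTE Ncd).
Qed.

Lemma nep_flipd d w : nep (flipd d w) = nep w.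
Proof. by rewrite /nep count_flipd //; apply: eq_count; case=> //= c h s; case: (_ == _). Qed.

Lemma split_first (P : pred pt) w : has P w -> exists a p b, w = a ++ p :: b /\ ~~ has P a /\ P p.
Proof.
elim: w => //= p w IH; case: (boolP (P p)) => Hp /= H.
  by exists [::], p, w.
case: (IH H) => a [q [b [-> [Ha Hq]]]]; exists (p :: a), q, b; split=> //=.
by rewrite negb_or Hp.
Qed.

Lemma chord_split c w : wf_gauss w -> has (is_chord c) w ->
  exists a b e h s, w = a ++ End c h s :: b ++ End c (~~h) s :: e /\
     count (is_chord c) (a ++ b ++ e) = 0.
Proof.
move=> Hw Hh; have [a [p1 [w1 [Ew [Ha Hp1]]]]] := split_first _ _ Hh.
have Hc2 : count (is_chord c) w = 2.
  case: (Hw c) => [H0|[s [_ _ ->]]] //; move: Hh; by rewrite has_count H0.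
have Ca : count (is_chord c) a = 0 by apply/eqP; rewrite eqn0Ngt -has_count.
move: Hc2; rewrite Ew count_cat Ca /= Hp1 add0n add1n => /eqP; rewrite eqSS => /eqP Hw1.
have Hh1 : has (is_chord c) w1 by rewrite has_count Hw1.
have [b [p2 [e [Ew1 [Hb Hp2]]]]] := split_first _ _ Hh1.
have Cb : count (is_chord c) b = 0 by apply/eqP; rewrite eqn0Ngt -has_count.
move: Hw1; rewrite Ew1 count_cat Cb /= Hp2 add0n add1n => /eqP; rewrite eqSS => /eqP Ce.
case: p1 Hp1 Ew => // c1 hh1 t1 /= /eqP Ec1; subst c1.
case: p2 Hp2 Ew1 => // c2 hh2 t2 /= /eqP Ec2; subst c2 => Ew1 Ew.
have sub h s u : count (is_chord c) u = 0 -> count (endb c h s) u = 0.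
  move=> H; apply/eqP; rewrite -leqn0 -H; apply: sub_count; case=> //= c' h' s'.
  by case/and3P.
case: (Hw c) => [H0|[s [H1 H2 _]]].
  by move: H0; rewrite Ew count_cat /= eqxx; lia.
move: H1 H2; rewrite Ew Ew1 !count_cat /= !count_cat /= !sub // !eqxx /=.
move=> H1 H2; exists a, b, e, hh1, t1; split; last by rewrite !count_cat Ca Cb Ce.
suff [-> ->] : hh2 = ~~ hh1 /\ t2 = t1 by [].
by move: H1 H2; case: (hh1); case: (hh2); case: (t1); case: (t2); case: (s).
Qed.

Lemma count0 c a m e o s o' s' : wf_gauss (a ++ End c o s :: m ++ End c o' s' :: e) ->
  count (is_chord c) (a ++ m ++ e) = 0.
Proof.
move=> Hw; case: (Hw c) => [|[t [_ _]]]; rewrite !count_cat /= !count_cat /= eqxx; lia.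
Qed.



Lemma flip_general ch12 ch34 d w : wf_gauss w -> has (is_chord d) w ->
  reachable (allowed_move ch12 ch34) w (flipd d w).
Proof.
move=> Hw Hh; have [a [b [e [h [s [Ew C0]]]]]] := chord_split _ _ Hw Hh.
move: C0; rewrite !count_cat => C0.
have Ca : count (is_chord d) a = 0 by lia.
have Cb : count (is_chord d) b = 0 by lia.
have Ce : count (is_chord d) e = 0 by lia.
rewrite Ew !(flipd_cat, flipd_cons) /= eqxx (flipd_free _ _ Ca) (flipd_free _ _ Cb) (flipd_free _ _ Ce) /=.
by have := flip_concrete ch12 ch34 d h s a b e; rewrite negbK.
Qed.

Definition SH a c o s k d oy t m3 e : gauss :=
  a ++ End c o s :: (nseq k Bar ++ End d oy t :: m3) ++ End c (~~o) s :: e.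

Definition Pr ch12 ch34 (W : gauss) :=
  exists w', reachable (allowed_move ch12 ch34) W w' /\ wf_gauss w' /\ nep w' < nep W.

Lemma Pr_back ch12 ch34 W W1 : reachable (allowed_move ch12 ch34) W W1 ->
  nep W1 = nep W -> Pr ch12 ch34 W1 -> Pr ch12 ch34 W.
Proof.
move=> H E [w' [H1 [H2 H3]]]; exists w'; split; last split => //.
  exact: reach_trans H H1.
by rewrite -E.
Qed.

Lemma nep_nseq k : nep (nseq k Bar) = 0.
Proof. by elim: k. Qed.

Lemma nseq_barC k (X : gauss) : nseq k Bar ++ Bar :: X = Bar :: nseq k Bar ++ X.
Proof. by elim: k => //= k ->. Qed.

Lemma Lflipc ch12 ch34 a c o s k d oy t m3 e :
  wf_gauss (SH a c o s k d oy t m3 e) ->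
  let W' := SH (a ++ [:: Bar]) c (~~o) (~~s) k.+1 d oy t (m3 ++ [:: Bar]) (Bar :: e) in
  [/\ wf_gauss W', reachable (allowed_move ch12 ch34) (SH a c o s k d oy t m3 e) W' &
     nep W' = nep (SH a c o s k d oy t m3 e)].
Proof.
move=> Hw W'.
have C0 := count0 _ _ _ _ _ _ _ _ Hw.
move: C0; rewrite !count_cat => C0.
have Ca : count (is_chord c) a = 0 by lia.
have Cm : count (is_chord c) (nseq k Bar ++ End d oy t :: m3) = 0 by rewrite count_cat; lia.
have Ce : count (is_chord c) e = 0 by lia.
have EW : W' = flipd c (SH a c o s k d oy t m3 e).
  rewrite /W' /SH flipd_cat flipd_cons /= eqxx flipd_cat (flipd_free _ _ Cm) flipd_cons /= eqxx.
  rewrite (flipd_free _ _ Ca) (flipd_free _ _ Ce) negbK; by lsimp.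
have Hh : has (is_chord c) (SH a c o s k d oy t m3 e) by rewrite /SH has_cat /= eqxx orbT.
rewrite EW; split; [exact: wf_flipd | exact: flip_general | exact: nep_flipd].
Qed.

Lemma Lflipd ch12 ch34 a c o s k d oy t m3 e :
  wf_gauss (SH a c o s k d oy t m3 e) ->
  let W' := SH (flipd d a) c o s k.+1 d (~~oy) (~~t) (Bar :: flipd d m3) (flipd d e) in
  [/\ wf_gauss W', reachable (allowed_move ch12 ch34) (SH a c o s k d oy t m3 e) W' &
     nep W' = nep (SH a c o s k d oy t m3 e)].
Proof.
move=> Hw W'.
have C0 := count0 _ _ _ _ _ _ _ _ Hw.
have Ncd : (c == d) = false.
  apply/negbTE/negP => /eqP Ecd; move: C0; rewrite !count_cat /= Ecd eqxx; lia.
have EW : W' = flipd d (SH a c o s k d oy t m3 e).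
  rewrite /W' /SH !(flipd_cat, flipd_cons) /= Ncd ?eqxx flipd_nseq /=.
  by rewrite nseq_barC.
have Hh : has (is_chord d) (SH a c o s k d oy t m3 e).
  by rewrite /SH !has_cat /= !has_cat /= eqxx !orbT.
rewrite EW; split; [exact: wf_flipd | exact: flip_general | exact: nep_flipd].
Qed.

Definition good3 ch12 ch34 (o k oy : bool) :=
  ((o == h1 ch12) && ~~ k && (oy == h1 ch12)) || ((o == h2 ch34) && k && (oy == h2 ch34)).

Definition Q ch12 ch34 N := forall a m e c o s, nep m < N ->
  wf_gauss (a ++ End c o s :: m ++ End c (~~o) s :: e) ->
  Pr ch12 ch34 (a ++ End c o s :: m ++ End c (~~o) s :: e).

Lemma samec_wf_nep w w' : samec w w' -> wf_gauss w -> wf_gauss w' /\ nep w' = nep w.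
Proof. by move=> H Hw; split; [exact: wf_samec H Hw | exact: nep_samec]. Qed.

Lemma L0 ch12 ch34 N a c o s k d oy t m3 e : Q ch12 ch34 N -> nep m3 < N ->
  wf_gauss (SH a c o s k d oy t m3 e) -> good3 ch12 ch34 o (odd k) oy ->
  Pr ch12 ch34 (SH a c o s k d oy t m3 e).
Proof.
move=> HQ Hm Hw Hg.
have C0 := count0 _ _ _ _ _ _ _ _ Hw.
have Ndc : d != c.
  apply/negP => /eqP Ecd; move: C0; rewrite !count_cat /= Ecd eqxx; lia.
pose W1 := a ++ End c o s :: (nseq (odd k) Bar ++ End d oy t :: m3) ++ End c (~~o) s :: e.
have R1 : reachable (allowed_move ch12 ch34) (SH a c o s k d oy t m3 e) W1.
  apply: (bars_reduce _ _ _ _ (a ++ [:: End c o s]) (End d oy t :: m3 ++ End c (~~o) s :: e) k);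
    rewrite /SH /W1; by lsimp.
have [Hw1 E1] : wf_gauss W1 /\ nep W1 = nep (SH a c o s k d oy t m3 e).
  apply: samec_wf_nep Hw => P PB; rewrite /SH /W1 !count_cat /= !count_cat !count_nseq PB /=.
  lia.
apply: Pr_back R1 E1 _.
case/orP: Hg => /andP [/andP [/eqP Eo Ek] /eqP Eoy]; subst o oy.
- pose W2 := (a ++ [:: End d (h1 ch12) t]) ++ End c (h1 ch12) s :: m3 ++ End c (~~ h1 ch12) s :: e.
  have R2 : reachable (allowed_move ch12 ch34) W1 W2.
    apply: (swap1 _ _ _ _ a (m3 ++ End c (~~ h1 ch12) s :: e) c d s t); first by rewrite eq_sym.
      by rewrite /W1 (negbTE Ek).
    by rewrite /W2; lsimp.
  have [Hw2 E2] : wf_gauss W2 /\ nep W2 = nep W1.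
    apply: samec_wf_nep Hw1 => P PB; rewrite /W1 /W2 (negbTE Ek) !count_cat /= !count_cat /=.
    lia.
  apply: Pr_back R2 E2 _; exact: HQ.
- pose W2 := (a ++ [:: End d (h2 ch34) t; Bar]) ++ End c (h2 ch34) s :: m3 ++ End c (~~ h2 ch34) s :: e.
  have R2 : reachable (allowed_move ch12 ch34) W1 W2.
    apply: (swap2 _ _ _ _ a (m3 ++ End c (~~ h2 ch34) s :: e) c d s t); first by rewrite eq_sym.
      by rewrite /W1 Ek.
    by rewrite /W2; lsimp.
  have [Hw2 E2] : wf_gauss W2 /\ nep W2 = nep W1.
    apply: samec_wf_nep Hw1 => P PB; rewrite /W1 /W2 Ek !count_cat /= !count_cat /= PB.
    lia.
  apply: Pr_back R2 E2 _; exact: HQ.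
Qed.



Lemma bar_prefix (m : gauss) : (exists k, m = nseq k Bar) \/
  exists k d oy t m3, m = nseq k Bar ++ End d oy t :: m3.
Proof.
elim: m => [|p m IH]; first by left; exists 0.
case: p => [|d oy t]; last by right; exists 0, d, oy, t, m.
case: IH => [[k ->]|[k [d [oy [t [m3 ->]]]]]].
  by left; exists k.+1.
by right; exists k.+1, d, oy, t, m3.
Qed.

Lemma key ch12 ch34 o k oy :
  [|| good3 ch12 ch34 o k oy, good3 ch12 ch34 (~~o) (~~k) oy,
      good3 ch12 ch34 o (~~k) (~~oy) | good3 ch12 ch34 (~~o) k (~~oy)].
Proof. by rewrite /good3; case: ch12; case: ch34; case: o; case: k; case: oy. Qed.

Lemma inner ch12 ch34 N : Q ch12 ch34 N.
Proof.
elim: N => [|N IH] a m e c o s Hm Hw; first by [].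
have C0 := count0 _ _ _ _ _ _ _ _ Hw.
case: (bar_prefix m) => [[k Em]|[k [d [oy [t [m3 Em]]]]]]; subst m.
- pose W1 := a ++ End c o s :: nseq (odd k) Bar ++ End c (~~o) s :: e.
  have R1 : reachable (allowed_move ch12 ch34) (a ++ End c o s :: nseq k Bar ++ End c (~~o) s :: e) W1.
    apply: (bars_reduce _ _ _ _ (a ++ [:: End c o s]) (End c (~~o) s :: e) k); rewrite /W1; by lsimp.
  have Fr : fresh c (a ++ e).
    rewrite /fresh has_count; move: C0; rewrite !count_cat count_nseq /=; lia.
  have Hwf : wf_gauss (a ++ e).
    move=> c'; case: (eqVneq c' c) => [->|Nc].
      by left; move: C0; rewrite !count_cat count_nseq /=; lia.
    have E P : P Bar = false -> P (End c o s) = false -> P (End c (~~o) s) = false ->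
        count P (a ++ End c o s :: nseq k Bar ++ End c (~~o) s :: e) = count P (a ++ e).
      by move=> PB P1 P2; rewrite !count_cat /= count_cat /= count_nseq PB P1 P2 /=; lia.
    have Nc' : (c == c') = false by rewrite eq_sym (negbTE Nc).
    case: (Hw c') => [H0|[s' [H1 H2 H3]]].
      by left; rewrite -E //= Nc'.
    right; exists s'; rewrite -!E //= Nc' //.
  exists (a ++ e); split; last split => //.
    apply: reach_trans R1 _; rewrite /W1; case: (odd k) => /=.
      exact: (t4rem _ _ _ _ a e c o s).
    exact: (r1rem _ _ _ _ a e c o s).
  rewrite /nep !count_cat /= count_cat count_nseq /=; lia.
- have Hm3 : nep m3 < N by move: Hm; rewrite /nep count_cat count_nseq /=; lia.
  have HQ : Q ch12 ch34 N := IH.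
  change (Pr ch12 ch34 (SH a c o s k d oy t m3 e)).
  change (wf_gauss (SH a c o s k d oy t m3 e)) in Hw.
  case/or4P: (key ch12 ch34 o (odd k) oy) => Hg.
  + exact: L0 HQ Hm3 Hw Hg.
  + have [Hw' R E] := Lflipc ch12 ch34 a c o s k d oy t m3 e Hw.
    apply: Pr_back R E _; apply: L0 HQ _ Hw' _; last by rewrite oddS.
    by move: Hm3; rewrite /nep count_cat /=; lia.
  + have [Hw' R E] := Lflipd ch12 ch34 a c o s k d oy t m3 e Hw.
    apply: Pr_back R E _; apply: L0 HQ _ Hw' _; last by rewrite oddS.
    by move: Hm3; rewrite /nep /= -/(nep (flipd d m3)) nep_flipd.
  + have [Hw' R E] := Lflipc ch12 ch34 a c o s k d oy t m3 e Hw.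
    apply: Pr_back R E _.
    have [Hw'' R' E'] := Lflipd ch12 ch34 _ _ _ _ _ _ _ _ _ _ Hw'.
    apply: Pr_back R' E' _; apply: L0 HQ _ Hw'' _; last by rewrite !oddS negbK.
    by move: Hm3; rewrite /nep /= -/(nep (flipd d (m3 ++ [:: Bar]))) nep_flipd /nep count_cat /=; lia.
Qed.

Lemma allbar (D : gauss) : ~~ has isEnd D -> D = nseq (size D) Bar.
Proof. elim: D => //= p D IH; case: p => //= H; by rewrite -IH. Qed.

Lemma main_ind ch12 ch34 n D : nep D < n -> wf_gauss D ->
  exists D', reachable (allowed_move ch12 ch34) D D' /\ (D' = [::] \/ D' = [:: Bar]).
Proof.
elim: n D => [|n IH] D Hn Hw; first by [].
case: (boolP (has isEnd D)) => HD.
- have [a [p [b [Ed [_ Hp]]]]] := split_first _ _ HD.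
  case: p Hp Ed => // c h s _ Ed.
  have Hh : has (is_chord c) D by rewrite Ed has_cat /= eqxx orbT.
  have [a' [b' [e' [h' [s' [Ed' _]]]]]] := chord_split _ _ Hw Hh.
  have HP := inner ch12 ch34 (nep b').+1 a' b' e' c h' s' (ltnSn _).
  rewrite -Ed' in HP; have [w' [R [Hw' Hlt]]] := HP Hw.
  have [D' [R' HD']] := IH w' (leq_trans Hlt Hn) Hw'.
  exists D'; split => //; exact: reach_trans R R'.
- exists (nseq (odd (size D)) Bar); split.
    apply: (bars_reduce _ _ _ _ [::] [::] (size D)); last by rewrite cats0.
    by rewrite cats0 /= -allbar.
  by case: (odd (size D)); [right|left].
Qed.

Theorem mainTheorem1 (ch12 : choice12) (ch34 : choice34) (D : gauss) :
  wf_gauss D ->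
  exists D', reachable (allowed_move ch12 ch34) D D' /\
             (D' = [::] \/ D' = [:: Bar]).
Proof. exact: main_ind (ltnSn (nep D)). Qed.
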